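(* A finite connected arc-transitive circulant $\Gamma$ is a normal circulant if and only if $\mathrm{Aut}(\Gamma)$ contains exactly one cyclic subgroup that is regular on the vertex set of $\Gamma$.
   Context: A digraph is a pair $(V,A)$ with $A\subseteq V\times V$; it is connected if its underlying undirected graph is connected and arc-transitive if $\mathrm{Aut}(\Gamma)$ is transitive on $A$. A digraph is a circulant if $\mathrm{Aut}(\Gamma)$ has a finite cyclic subgroup regular on $V$, and a normal circulant if $\mathrm{Aut}(\Gamma)$ has a finite cyclic subgroup that is regular on $V$ and normal in $\mathrm{Aut}(\Gamma)$. *)

(* Defs.v *)
From mathcomp Require Import all_boot all_fingroup all_solvable.
Set Implicit Arguments. Unset Strict Implicit. Unset Printing Implicit Defensive.
Local Open Scope group_scope.

(* A digraph Gamma = (V, A) with V a finite type and arc relation A ⊆ V × V. *)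

Definition DAut (V : finType) (A : rel V) : {set {perm V}} :=
  [set g : {perm V} | [forall x, forall y, A (g x) (g y) == A x y]].

Definition dconnected (V : finType) (A : rel V) : Prop :=
  forall x y : V, connect (fun u v => A u v || A v u) x y.

Definition arc_transitive (V : finType) (A : rel V) : Prop :=
  forall x1 y1 x2 y2 : V, A x1 y1 -> A x2 y2 ->
    exists2 g, g \in DAut A & (g x1 = x2 /\ g y1 = y2).

Definition regular (V : finType) (H : {set {perm V}}) : Prop :=
  [transitive H, on [set: V] | 'P] /\ (forall x : V, 'C_H[x | 'P] = 1).

Definition circulant (V : finType) (A : rel V) : Prop :=
  exists H : {group {perm V}}, [/\ H \subset DAut A, cyclic H & regular H].

Definition normal_circulant (V : finType) (A : rel V) : Prop :=
  exists H : {group {perm V}},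
    [/\ H \subset DAut A, cyclic H, regular H & H <| DAut A].

(* Main.v *)
Require Import Defs.
From mathcomp Require Import all_boot all_fingroup all_solvable.
From mathcomp Require Import zify.
Local Open Scope group_scope.

Module Aux.
Set Implicit Arguments. Unset Strict Implicit. Unset Printing Implicit Defensive.

Section Reg.
Variable V : finType.
Implicit Types H K : {group {perm V}}.

Lemma reg_trans H x y : regular H -> exists2 h, h \in H & h x = y.
Proof.
case=> tr _. have : y \in orbit 'P H x by rewrite (atransP tr) ?inE.
by case/orbitP=> h hH <-; exists h.
Qed.

Lemma reg_fix H x h : regular H -> h \in H -> h x = x -> h = 1.
Proof.
case=> _ st hH hx. have : h \in 'C_H[x | 'P] by rewrite inE hH; apply/astab1P.
by rewrite st => /set1P.
Qed.

Lemma reg_card H (x : V) : regular H -> #|H| = #|V|.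
Proof.
move=> rH; have [tr st] := rH.
have := card_orbit 'P H x; rewrite (atransP tr) ?inE // st indexg1 cardsT.
by [].
Qed.

Lemma reg_sub_eq H K : regular H -> regular K -> K \subset H -> K = H.
Proof.
move=> rH rK sKH; apply/val_inj/eqP; rewrite eqEsubset sKH /=.
apply/subsetP=> h hH.
case: (pickP (fun _ : V => true)) => [v _|e]; last first.
  have -> : h = 1 by apply/permP=> x; have := e x.
  exact: group1.
have [k kK kv] := reg_trans v (h v) rK.
have kH : k \in H := subsetP sKH k kK.
have : (k * h^-1) v = v by rewrite permM kv -permM mulgV perm1.
move/(reg_fix rH (groupM kH (groupVr hH)))=> E.
have <- : k = h by rewrite -[k]mulg1 -(mulVg h) mulgA E mul1g.
by [].
Qed.
End Reg.

Section Reg2.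
Variable V : finType.
Implicit Types H K : {group {perm V}}.

Lemma regular_intro H (x0 : V) :
  (forall y, exists2 h, h \in H & h x0 = y) ->
  (forall h x, h \in H -> h x = x -> h = 1) -> regular H.
Proof.
move=> tr fx; split.
  apply/imsetP; exists x0; rewrite ?inE //.
  apply/eqP; rewrite eqEsubset subsetT andbT; apply/subsetP=> y _.
  by have [h hH hy] := tr y; apply/orbitP; exists h.
move=> x; apply/trivgP/subsetP=> h /setIP [hH /astab1P hx].
by rewrite inE; apply/eqP; apply: fx hx.
Qed.

Lemma regular_conj H g : regular H -> regular (H :^ g)%G.
Proof.
move=> rH; have [tr _] := rH; case/imsetP: tr => x0 _ _.
apply: (@regular_intro _ (g x0)).
  move=> y; have [h hH hy] := reg_trans x0 (g^-1 y) rH.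
  exists (h ^ g); first by rewrite memJ_conjg.
  by rewrite conjgE !permM permK hy -permM mulVg perm1.
move=> h' x; rewrite mem_conjg => hH hx.
have : (h' ^ g^-1) (g^-1 x) = g^-1 x.
  by rewrite conjgE invgK !permM permKV hx.
move/(reg_fix rH hH) => E.
by rewrite -(conjgKV g h') E conj1g.
Qed.
End Reg2.

Section Aut.
Variables (V : finType) (A : rel V).
Lemma DAutP (g : {perm V}) : reflect (forall x y, A (g x) (g y) = A x y) (g \in DAut A).
Proof.
rewrite inE; apply: (iffP forallP) => [h x y|h x].
  by have /forallP/(_ y)/eqP := h x.
by apply/forallP=> y; rewrite h.
Qed.

Lemma DAut_group_set : group_set (DAut A).
Proof.
apply/andP; split; first by apply/DAutP=> x y; rewrite !perm1.
apply/subsetP=> g /mulsgP [a b /DAutP ha /DAutP hb ->].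
by apply/DAutP=> x y; rewrite !permM hb ha.
Qed.
Canonical DAut_group := group DAut_group_set.
End Aut.

Section Helpers.
Variable V : finType.
Implicit Types H K : {group {perm V}}.

Lemma comm_cyc H x y : cyclic H -> x \in H -> y \in H -> x * y = y * x.
Proof.
move/cyclic_abelian=> ab xH yH.
exact: (centsP ab) x xH y yH.
Qed.

Lemma reg_eq H (x : V) (g h : {perm V}) : regular H -> g \in H -> h \in H -> g x = h x -> g = h.
Proof.
move=> rH gH hH e.
have : (g * h^-1) x = x by rewrite permM e -permM mulgV perm1.
move/(reg_fix rH (groupM gH (groupVr hH))) => E.
by rewrite -[g]mulg1 -(mulVg h) mulgA E mul1g.
Qed.

Lemma fix_cent_one H (v : V) (g : {perm V}) : regular H -> g v = v ->
  (forall h, h \in H -> h * g = g * h) -> g = 1.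
Proof.
move=> rH gv cg; apply/permP=> x; rewrite perm1.
have [h hH <-] := reg_trans v x rH.
by rewrite -permM cg // permM gv.
Qed.

Lemma twin_contra H (a b : V) : regular H -> cyclic H -> a != b ->
  tperm a b \in 'N(H) -> 5 <= #|V| -> False.
Proof.
move=> rH cH ab nH n5.
have avoid : forall s : seq V, size s < #|V| -> exists z, z \notin s.
  move=> s hs; case: (pickP (fun z => z \notin s)) => [z hz|e]; first by exists z.
  have : #|V| <= #|s|.
    by apply/subset_leq_card/subsetP=> z _; have := e z; rewrite /=; case: (z \in s).
  by move=> h; have := leq_trans h (card_size s); rewrite leqNgt hs.
have hc : forall h, h \in H -> h ^ tperm a b = h.
  move=> h hH.
  have [z] := avoid [:: a; b; h^-1 a; h^-1 b] (leq_ltn_trans (leqnn 4) n5).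
  rewrite !inE !negb_or => /and4P [za zb zha zhb].
  have hza : h z != a by apply: contra zha => /eqP <-; rewrite permK.
  have hzb : h z != b by apply: contra zhb => /eqP <-; rewrite permK.
  apply/esym/(reg_eq (x := z) rH hH); first by rewrite memJ_norm.
  by rewrite conjgE tpermV !permM tpermD // 1?eq_sym // tpermD // 1?eq_sym.
have [c] := avoid [:: a; b] (leq_trans (isT : 3 <= 5) n5).
rewrite !inE !negb_or => /andP [ca cb].
have [h hH hc'] := reg_trans c a rH.
have := hc h hH; rewrite conjgE tpermV => E.
have : (tperm a b * (h * tperm a b)) c = h c by rewrite E.
have t1 : tperm a b c = c by rewrite tpermD // eq_sym.
rewrite !permM t1 hc' tpermL => /eqP.
by rewrite eq_sym (negbTE ab).
Qed.
End Helpers.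

Lemma orbP (V : finType) (G : {group {perm V}}) (x y : V) :
  reflect (exists2 g, g \in G & g x = y) (y \in orbit 'P G x).
Proof.
by apply: (iffP orbitP) => [[g gG <-]|[g gG <-]]; exists g.
Qed.

Section Gen.
Variables (V : finType) (A : rel V).
Implicit Types H K : {group {perm V}}.

Lemma arc_gen H (v y0 : V) u :
  dconnected A -> arc_transitive A -> H \subset DAut A -> cyclic H ->
  regular H -> H <| DAut A -> u \in H -> u v = y0 -> A v y0 -> <[u]> = H.
Proof.
move=> con atr sHG cH rH nHG uH uv Avy.
have sUH : <[u]> \subset H by rewrite cycle_subG.
have step : forall x z, A x z -> exists2 g, g \in <[u]> & g x = z.
  move=> x z Axz; have [g gG [gv gy]] := atr _ _ _ _ Avy Axz.
  have gN : g \in 'N(H) := subsetP (normal_norm nHG) g gG.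
  have uJ : u ^ g \in H by rewrite memJ_norm.
  have e : <[u ^ g]> = <[u]>.
    apply/eqP; rewrite (eq_subG_cyclic cH) ?cycle_subG //.
    by rewrite -!orderE orderJ.
  exists (u ^ g); first by rewrite -e cycle_id.
  by rewrite conjgE !permM -gv permK uv gy.
pose a := fun y => y \in orbit 'P <[u]> v.
have cl : closed (fun x z => A x z || A z x) a.
  have dir : forall x z, A x z -> a x = a z.
    move=> x z Axz; have [g gU gx] := step _ _ Axz; rewrite /a.
    apply/idP/idP => /orbP [g0 g0U g0v].
      by apply/orbP; exists (g0 * g); rewrite ?groupM // permM g0v.
    apply/orbP; exists (g0 * g^-1); rewrite ?groupM ?groupV //.
    by rewrite permM g0v -gx permK.
  by move=> x z /orP [] Axz; [apply: dir | apply/esym/dir].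
apply/eqP; rewrite eqEsubset sUH /=; apply/subsetP=> h hH.
have : h v \in orbit 'P <[u]> v.
  have := closed_connect cl (con v (h v)); rewrite /a /= => <-.
  by apply/orbP; exists 1; rewrite ?group1 // perm1.
case/orbP=> g gU ghv.
by rewrite -(reg_eq rH (subsetP sUH g gU) hH ghv).
Qed.
End Gen.

Section Main.
Variables (V : finType) (A : rel V) (H K : {group {perm V}}).
Hypotheses (con : dconnected A) (atr : arc_transitive A)
  (sHG : H \subset DAut A) (cH : cyclic H) (rH : regular H) (nHG : H <| DAut A)
  (sKG : K \subset DAut A) (cK : cyclic K) (rK : regular K).

Lemma main_dir : K = H.
Proof.
case: (boolP (K \subset H)) => [sKH|nsKH]; first exact: reg_sub_eq.
exfalso.
have [k defK] := cyclicP cK.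
have kH : k \notin H by apply: contra nsKH => kH; rewrite defK cycle_subG.
have [v _] : exists v : V, true.
  case: (pickP (fun _ : V => true)) => [v _|e]; first by exists v.
  have k1 : k = 1 by apply/permP=> x; have := e x.
  by move: kH; rewrite k1 group1.
have kG : k \in DAut_group A by apply: (subsetP sKG); rewrite defK cycle_id.
have [w wH wv] := reg_trans v (k v) rH.
have wG : w \in DAut_group A := subsetP sHG w wH.
pose s := k * w^-1.
have sv : s v = v by rewrite permM -wv permK.
have sG : s \in DAut_group A by rewrite groupM ?groupV.
have sN : s \in 'N(H) := subsetP (normal_norm nHG) s sG.
have ks : k = s * w by rewrite /s -mulgA mulVg mulg1.
clearbody s.
have JH : forall x, x \in H -> x ^ s \in H by move=> x xH; rewrite memJ_norm.
have cm : forall x y, x \in H -> y \in H -> x * y = y * x.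
  by move=> x y; apply: comm_cyc.
pose f := fun x => x^-1 * x ^ s.
have fM : {in H &, {morph f : x y / x * y}}.
  move=> x y xH yH; rewrite /f conjMg invMg.
  move: (x ^ s) (y ^ s) (JH x xH) (JH y yH) => a b aH bH.
  have e1 : y^-1 * x^-1 = x^-1 * y^-1 by rewrite cm ?groupV.
  have e2 : y^-1 * a = a * y^-1 by rewrite cm ?groupV.
  by rewrite e1 -!mulgA; congr (_ * _); rewrite mulgA e2 -mulgA.
pose fm := Morphism fM.
have fmE : forall x, fm x = x^-1 * x ^ s by [].
have cardHNC : #|H| = (#|'ker fm| * #|fm @* H|)%N.
  rewrite card_morphim setIid Lagrange //.
  exact: subsetIl.
have sE : s = k * w^-1 by rewrite ks mulgK.
have kpow : forall i, exists2 h, h \in H & k ^+ i = s ^+ i * h.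
  elim=> [|i [h hH IH]]; first by exists 1; rewrite ?group1 ?expg0 ?mulg1.
  exists (h ^ s * w); first by rewrite groupM ?JH.
  by rewrite expgSr IH ks conjgE !mulgA expgSr mulgK.
have [h0 h0H kd] := kpow #[s].
rewrite expg_order mul1g in kd.
have h0k : commute h0 k by rewrite -kd; apply: commute_sym; apply: commuteX.
have h0s : commute h0 s.
  by rewrite sE; apply: commuteM h0k (commuteV (cm _ _ h0H wH)).
have h0C : h0 \in 'ker fm.
  apply/kerP=> //; rewrite fmE conjgE.
  by rewrite h0s mulKg mulVg.
have ordk : #[k] = #|V| by rewrite orderE -defK (reg_card v rK).
have cardH : #|H| = #|V| by rewrite (reg_card v rH).
have dvd1 : #[k] %| #[s] * #[h0].
  by rewrite order_dvdn expgM kd expg_order.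
have le1 : #[h0] <= #|'ker fm|.
  by rewrite orderE; apply: subset_leq_card; rewrite cycle_subG.
have Nle : #|fm @* H| <= #[s].
  have : (#|'ker fm| * #|fm @* H| <= #[s] * #|'ker fm|)%N.
    rewrite -cardHNC cardH -ordk; apply: leq_trans (dvdn_leq _ dvd1) _.
      by rewrite muln_gt0 !order_gt0.
    by rewrite leq_mul.
  by rewrite mulnC leq_pmul2r // cardG_gt0.
have fixc : forall x y : {perm V}, x ^ y = x -> x * y = y * x.
  by move=> x y E; rewrite -{2}E conjgE mulKVg.
have Nn1 : fm @* H != 1.
  apply/negP => /eqP N1.
  have s1 : s = 1.
    apply: (fix_cent_one (v := v) rH sv) => h hH.
    have : fm h \in fm @* H by apply: mem_morphim.
    rewrite N1 inE fmE => /eqP E.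
    by apply: fixc; rewrite -(mulKVg h (h ^ s)) E mulg1.
  by move: kH; rewrite ks s1 mul1g wH.
have [pi piN pi1] := trivgPn _ Nn1.
have sfix : forall y, y \in <[s]> -> y v = v.
  move=> _ /cycleP [i ->]; elim: i => [|i IH]; first by rewrite expg0 perm1.
  by rewrite expgSr permM IH sv.
have sDA : <[s]> \subset DAut_group A by rewrite cycle_subG.
have NH : fm @* H \subset H.
  apply/subsetP=> _ /morphimP [x xH _ ->]; rewrite fmE groupM ?groupV ?JH //.
have YL : forall u, <[u]> = H ->
    [set u^-1 * u ^ y | y in <[s]>] = fm @* H /\ #|[set u^-1 * u ^ y | y in <[s]>]| = #[s].
  move=> u Hu; have uH : u \in H by rewrite -Hu cycle_id.
  pose Y := [set u^-1 * u ^ y | y in <[s]>].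
  have YN : Y \subset fm @* H.
    apply/subsetP=> _ /imsetP [y /cycleP [i ->] ->].
    elim: i => [|i IH]; first by rewrite expg0 conjg1 mulVg group1.
    move: IH; rewrite expgSr conjgM.
    move: (u ^ s ^+ i) => t tN.
    have -> : t = u * (u^-1 * t) by rewrite mulKVg.
    move: (u^-1 * t) tN => t' t'N.
    rewrite conjMg mulgA; apply: groupM.
      by rewrite -fmE mem_morphim.
    case/morphimP: t'N => x xH _ ->.
    by rewrite fmE conjMg conjVg -fmE mem_morphim ?JH.
  have cardY : #|Y| = #[s].
    rewrite orderE card_in_imset // => y1 y2 y1s y2s /mulgI E.
    have g1 : y1 * y2^-1 = 1.
      apply: (fix_cent_one (v := v) rH); first by rewrite sfix // groupM ?groupV.
      move=> h; rewrite -Hu => /cycleP [i ->]; apply/esym/commuteX.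
      by apply: commute_sym; apply: fixc; rewrite conjgM E conjgK.
    by rewrite -[y1](mulgKV y2) g1 mul1g.
  split=> //.
  by apply/eqP; rewrite eqEcard YN cardY Nle.
have twin0 : forall p, p \in fm @* H -> forall y0, A v y0 -> A v (p y0).
  move=> p pN y0 Avy0.
  have [u uH uv] := reg_trans v y0 rH.
  have Hu : <[u]> = H := arc_gen con atr sHG cH rH nHG uH uv Avy0.
  have [YeqN _] := YL u Hu.
  move: pN; rewrite -YeqN => /imsetP [y ys ->].
  have yG : y \in DAut_group A := subsetP sDA y ys.
  have -> : (u^-1 * u ^ y) y0 = y y0.
    rewrite -uv -permM mulKVg conjgE !permM.
    by rewrite (sfix _ (groupVr ys)).
  by rewrite -{1}(sfix _ ys); rewrite (DAutP _ _ yG).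
have DH : forall h, h \in H -> forall x z, A (h x) (h z) = A x z.
  by move=> h hH; apply/DAutP; apply: (subsetP sHG).
have twin : forall p, p \in fm @* H -> forall x z, A x z -> A x (p z).
  move=> p pN x z; have [h hH <-] := reg_trans v x rH.
  rewrite -{1}(permKV h z) DH // => /(twin0 p pN).
  have pH : p \in H := subsetP NH p pN.
  by rewrite -(DH h hH) -!permM (cm _ _ pH hH) mulKg.
have twinE : forall p, p \in fm @* H -> forall x z, A x (p z) = A x z.
  move=> p pN x z; apply/idP/idP; last exact: twin.
  by move/(twin _ (groupVr pN)); rewrite permK.
have twinL : forall p, p \in fm @* H -> forall x z, A (p x) z = A x z.
  move=> p pN x z; have pH : p \in H := subsetP NH p pN.
  by rewrite -{1}(permKV p z) DH // twinE ?groupV.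
have piH : pi \in H := subsetP NH pi piN.
have piv : v != pi v.
  apply/negP => /eqP E; move: pi1; rewrite (reg_fix rH piH (esym E)) eqxx //.
set tau := tperm v (pi v).
have tauG : tau \in DAut A.
  have L : forall x z, A (tau x) z = A x z.
    by move=> x z; rewrite /tau; case: tpermP => [->|->|] //; rewrite twinL.
  have R : forall x z, A x (tau z) = A x z.
    by move=> x z; rewrite /tau; case: tpermP => [->|->|] //; rewrite twinE.
  by apply/DAutP=> x z; rewrite L R.
have tauN : tau \in 'N(H) := subsetP (normal_norm nHG) tau tauG.
case: (leqP 5 #|V|) => [n5|n4]; first exact: twin_contra rH cH piv tauN n5.
have [u0 Hu0] := cyclicP cH.
have [Ye cY] := YL u0 (esym Hu0).
rewrite Ye in cY.
have u0H : u0 \in H by rewrite Hu0 cycle_id.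
have N2 : 1 < #|fm @* H|.
  rewrite ltn_neqAle cardG_gt0 andbT eq_sym; apply: contra Nn1.
  by rewrite trivg_card1.
have C2 : 1 < #|'ker fm|.
  rewrite ltn_neqAle cardG_gt0 andbT eq_sym; apply/negP => /eqP C1.
  have NeH : fm @* H = H.
    apply/eqP; rewrite eqEcard NH /= cardHNC C1 mul1n leqnn //.
  have : u0^-1 \in fm @* H by rewrite NeH groupV.
  rewrite -Ye => /imsetP [y _ /esym].
  rewrite -{2}(mulg1 u0^-1) => /mulgI /eqP; rewrite conjg_eq1 => /eqP u01.
  move: N2; rewrite NeH Hu0 u01 cycle1 cards1 //.
have n4' : #|V| = 4.
  apply/eqP; rewrite eqn_leq -ltnS n4 -cardH cardHNC.
  by apply: (@leq_mul 2 2).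
have Nc : #|fm @* H| = 2.
  have := cardHNC; rewrite cardH n4'; move: C2 N2.
  move: #|'ker fm| #|fm @* H| => a b C2' N2' E.
  apply/eqP; rewrite eqn_leq N2' andbT leqNgt; apply/negP => b3.
  by have := leq_mul C2' b3; rewrite -E.
have ds : #[s] = 2 by rewrite -cY.
have ou : #[u0] = 4 by rewrite orderE -Hu0 cardH.
pose t := u0^-1 * u0 ^ s.
have tN : t \in fm @* H by rewrite -Ye; apply/imsetP; exists s; rewrite ?cycle_id.
have t1 : t != 1.
  apply/negP => /eqP E.
  have s1 : s = 1.
    apply: (fix_cent_one (v := v) rH sv) => h; rewrite Hu0 => /cycleP [i ->].
    apply/esym/commuteX; apply: commute_sym; apply: fixc.
    by rewrite -(mulKVg u0 (u0 ^ s)) -/t E mulg1.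
  by move: ds; rewrite s1 order1.
have t2 : t ^+ 2 = 1 by rewrite -Nc expg_cardG.
have tH : t \in <[u0]> by rewrite -Hu0 (subsetP NH).
have [i ilt ti] := cyclePmin tH.
have ti2 : t = u0 ^+ 2.
  move: t1 t2 ilt; rewrite ti -expgM ou; case: i {ti} => [|[|[|[|i]]]] //.
    by rewrite expg0 eqxx.
  by move=> _ E; have := order_dvdn u0 2; rewrite E eqxx ou.
  by move=> _ E; have := order_dvdn u0 6; rewrite -[6]/(3 * 2)%N E eqxx ou.
have us : u0 ^ s = u0 ^+ 3 by rewrite -(mulKVg u0 (u0 ^ s)) -/t ti2 -expgS.
have wH' : w \in <[u0]> by rewrite -Hu0.
have [j wj] := cycleP _ _ wH'.
have k2 : k ^+ 2 = 1.
  rewrite expgS expg1 ks.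
  have -> : s * w * (s * w) = s ^+ 2 * (w ^ s * w).
    by rewrite expgS expg1 conjgE !mulgA mulgK.
  have : s ^+ 2 = 1 by rewrite -ds expg_order.
  move=> ->; rewrite mul1g wj conjXg us -expgM -expgD.
  by rewrite -mulSnr expgM -ou expg_order expg1n.
have := order_dvdn k 2; rewrite k2 eqxx ordk n4'.
by [].
Qed.
End Main.

End Aux.
Import Aux.

Theorem proposition3p3 (V : finType) (A : rel V) :
  dconnected A -> arc_transitive A -> circulant A ->
  (normal_circulant A <->
   exists H : {group {perm V}},
     [/\ H \subset DAut A, cyclic H, regular H &
       forall K : {group {perm V}},
         K \subset DAut A -> cyclic K -> regular K -> K = H]).
Proof.
move=> con atr _; split.
  case=> H [sHG cH rH nHG]; exists H; split=> // K sKG cK rK.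
  exact: main_dir.
case=> H [sHG cH rH uH]; exists H; split=> //.
apply/andP; split=> //; apply/subsetP=> g gG; rewrite inE.
have gG' : g \in DAut_group A by [].
have E : (H :^ g)%G = H.
  apply: uH; last exact: regular_conj.
    by rewrite -(conjGid gG') conjSg.
  by rewrite cyclicJ.
by have := congr1 val E => /= ->.
Qed.
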